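(* Let $n \geq 1$ be an integer and consider Nim on the hypercube $Q_n$ in which every edge has weight $1$, with the playing piece $\Delta$ starting at a vertex. Then the first player $P_1$ has a winning strategy if and only if $n$ is odd.
   Context: Nim on a graph: two players agree on a finite simple undirected graph $G$ whose edges carry positive integer weights, and a starting vertex on which a playing piece $\Delta$ is placed. Players $P_1$ (who moves first) and $P_2$ alternate. On a turn, the player chooses an edge of positive weight incident with the vertex currently holding $\Delta$, lowers that edge's weight by a positive integer amount, and moves $\Delta$ to the other endpoint of that edge. Edges of weight $0$ are no longer playable. A player who cannot move loses. The hypercube $Q_n$ has as vertices the binary $n$-tuples, two being adjacent iff they differ in exactly one coordinate. *)

(* Defs.v *)
From mathcomp Require Import all_boot.
Set Implicit Arguments. Unset Strict Implicit. Unset Printing Implicit Defensive.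

(* Edge weights are a function on
   unordered pairs {u,v}, represented as the 2-element set [set u; v]. *)

Definition nim_pos (V : finType) := (({set V} -> nat) * V)%type.

Definition nim_move (V : finType) (adj : rel V) (s t : nim_pos V) : Prop :=
  adj s.2 t.2 /\
  exists k, 0 < k <= s.1 [set s.2; t.2] /\
    forall e, t.1 e = (if e == [set s.2; t.2] then s.1 e - k else s.1 e).

(* nim_win adj s : the player about to move from position s has a winning
   strategy (the game is finite since total weight strictly decreases; a
   player who cannot move loses). *)
Inductive nim_win (V : finType) (adj : rel V) : nim_pos V -> Prop :=
| NimWin (s t : nim_pos V) :
    nim_move adj s t ->
    (forall u, nim_move adj t u -> nim_win adj u) ->
    nim_win adj s.

Definition hcube_vertex (n : nat) := {ffun 'I_n -> bool}.

Definition hcube_adj (n : nat) : rel (hcube_vertex n) :=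
  fun u v => #|[set i : 'I_n | u i != v i]| == 1.

(* All edges have weight 1 (non-edges: weight 0, irrelevant to the game). *)
Definition hcube_unit_weights (n : nat) : {set hcube_vertex n} -> nat :=
  fun e => if [exists u, exists v, hcube_adj u v && (e == [set u; v])]
           then 1 else 0.

(* Main.v *)
Require Import Defs.
From mathcomp Require Import all_boot.
From mathcomp Require Import zify.
Set Implicit Arguments. Unset Strict Implicit. Unset Printing Implicit Defensive.

Definition flip m (v : hcube_vertex m) (i : 'I_m) : hcube_vertex m :=
  [ffun k => if k == i then ~~ v k else v k].

Lemma flipE m (v : hcube_vertex m) i k : flip v i k = if k == i then ~~ v k else v k.
Proof. by rewrite ffunE. Qed.

Lemma flipK m (v : hcube_vertex m) i : flip (flip v i) i = v.
Proof. apply/ffunP => k; rewrite !flipE; case: (k == i) => //; by rewrite negbK. Qed.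

Lemma flipC m (v : hcube_vertex m) a b : flip (flip v a) b = flip (flip v b) a.
Proof. apply/ffunP => k; rewrite !flipE; by case: (k == a); case: (k == b). Qed.

Lemma flip_neq m (v : hcube_vertex m) i : flip v i != v.
Proof. apply/eqP => /ffunP /(_ i); rewrite flipE eqxx; by case: (v i). Qed.

Lemma flip_inj m (v : hcube_vertex m) a b : flip v a = flip v b -> a = b.
Proof.
move/ffunP/(_ a); rewrite !flipE eqxx; case: (a =P b) => [-> //|_]; by case: (v a).
Qed.

Lemma flip2_neq0 m (v : hcube_vertex m) a b : a != b -> flip (flip v a) b != v.
Proof.
move=> ab; apply/eqP => /ffunP /(_ a); rewrite !flipE eqxx (negbTE ab); by case: (v a).
Qed.

Lemma flip2_neq1 m (v : hcube_vertex m) a b c : a != b -> flip (flip v a) b != flip v c.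
Proof.
move=> ab; apply/eqP => E; case: (c =P a) => [ca|ca].
  move: E => /ffunP /(_ b); rewrite ca !flipE eqxx eq_sym (negbTE ab); by case: (v b).
move: E => /ffunP /(_ a); rewrite !flipE eqxx (negbTE ab).
have -> : (a == c) = false by apply/eqP => h; apply: ca.
by case: (v a).
Qed.

Lemma flip2_eq m (v : hcube_vertex m) a b i j :
  a != b -> flip (flip v a) b = flip (flip v i) j -> (a == i) || (a == j).
Proof.
move=> ab /ffunP /(_ a); rewrite !flipE eqxx (negbTE ab).
case: (a == j); case: (a == i) => //=; by case: (v a).
Qed.

Lemma adj_flip m (v : hcube_vertex m) i : hcube_adj v (flip v i).
Proof.
rewrite /hcube_adj.
have -> : [set k | v k != flip v i k] = [set i].
  apply/setP => k; rewrite !inE flipE; case: (k == i); first by case: (v k).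
  by rewrite eqxx.
by rewrite cards1.
Qed.

Lemma adj_inv m (u w : hcube_vertex m) : hcube_adj u w -> exists i, w = flip u i.
Proof.
rewrite /hcube_adj => /cards1P [i Hi]; exists i; apply/ffunP => k.
move/setP: Hi => /(_ k); rewrite !inE flipE.
case: (k == i) => H; move: H; by case: (u k); case: (w k).
Qed.

Lemma neq_set (T : finType) (x : T) (A B : {set T}) : x \in A -> x \notin B -> A != B.
Proof. by move=> xA xB; apply/eqP => E; rewrite E in xA; rewrite xA in xB. Qed.

Lemma set2_eq_l (T : finType) (y z x : T) : y != x -> ([set y; z] == [set y; x]) = (z == x).
Proof.
move=> yx; apply/eqP/eqP => [E|-> //].
have : x \in [set y; z] by rewrite E set22.
rewrite in_set2 => /orP [/eqP xy|/eqP -> //].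
by rewrite xy eqxx in yx.
Qed.

Definition mu m (s : nim_pos (hcube_vertex m)) := \sum_(e : {set hcube_vertex m}) s.1 e.

Lemma move_mu m (s t : nim_pos (hcube_vertex m)) : nim_move (@hcube_adj m) s t -> mu t < mu s.
Proof.
case=> _ [k [/andP [k0 kle] Ht]].
rewrite /mu [X in X < _](bigD1 [set s.2; t.2]) // [X in _ < X](bigD1 [set s.2; t.2]) //=.
have -> : \sum_(i | i != [set s.2; t.2]) t.1 i = \sum_(i | i != [set s.2; t.2]) s.1 i.
  by apply: eq_bigr => e /negbTE ne; rewrite Ht ne.
rewrite ltn_add2r Ht eqxx ltn_subrL k0 /=; exact: leq_trans k0 kle.
Qed.

Lemma mk_move m (w : {set hcube_vertex m} -> nat) x y :
  hcube_adj x y -> w [set x; y] = 1 ->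
  nim_move (@hcube_adj m) (w, x) ((fun e => if e == [set x; y] then 0 else w e), y).
Proof.
move=> a w1; rewrite /nim_move /=; split => //; exists 1; rewrite w1; split => // e.
by case: ifP => // /eqP ->; rewrite w1.
Qed.

Lemma move_unit m (s t : nim_pos (hcube_vertex m)) :
  (forall e, s.1 e <= 1) -> nim_move (@hcube_adj m) s t ->
  [/\ hcube_adj s.2 t.2, s.1 [set s.2; t.2] = 1 &
      forall e, t.1 e = if e == [set s.2; t.2] then 0 else s.1 e].
Proof.
move=> le1 [a [k [/andP [k0 kle] Ht]]].
have L := le1 [set s.2; t.2].
have E1 : s.1 [set s.2; t.2] = 1 by apply/eqP; rewrite eqn_leq L (leq_trans k0 kle).
have k1 : k = 1 by apply/eqP; rewrite eqn_leq k0 andbT; move: kle; rewrite E1.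
split => // e; rewrite Ht; case: ifP => // /eqP ->; by rewrite E1 k1.
Qed.

Lemma w0_le1 m e : @hcube_unit_weights m e <= 1.
Proof. by rewrite /hcube_unit_weights; case: ifP. Qed.

Lemma w0_adj m (u v : hcube_vertex m) : hcube_adj u v -> hcube_unit_weights [set u; v] = 1.
Proof.
move=> H; rewrite /hcube_unit_weights ifT //.
by apply/existsP; exists u; apply/existsP; exists v; rewrite H eqxx.
Qed.

Lemma set2C (T : finType) (a b : T) : [set a; b] = [set b; a].
Proof. by apply/setP => z; rewrite !in_set2 orbC. Qed.

Lemma adj_sym m (u w : hcube_vertex m) : hcube_adj u w -> hcube_adj w u.
Proof. move=> /adj_inv [i ->]; rewrite -{2}(flipK u i); exact: adj_flip. Qed.

Definition side m (v : hcube_vertex m) := odd #|[set i | v i]|.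

Lemma side_flip m (v : hcube_vertex m) i : side (flip v i) = ~~ side v.
Proof.
rewrite /side; case vi: (v i).
  have -> : [set k | flip v i k] = [set k | v k] :\ i.
    apply/setP => k; rewrite !inE flipE; have [->|ne] := eqVneq k i.
      by rewrite ?eqxx vi.
    by rewrite ?(negbTE ne).
  by rewrite [in RHS](cardsD1 i) inE vi add1n /= negbK.
have -> : [set k | flip v i k] = i |: [set k | v k].
  apply/setP => k; rewrite !inE flipE; have [->|ne] := eqVneq k i.
    by rewrite ?eqxx vi.
  by [].
by rewrite cardsU1 inE vi add1n.
Qed.

Lemma side_adj m (u w : hcube_vertex m) : hcube_adj u w -> side w = ~~ side u.
Proof. by move=> /adj_inv [i ->]; rewrite side_flip. Qed.

Lemma adj_neq m (u w : hcube_vertex m) : hcube_adj u w -> w != u.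
Proof. by move=> /adj_inv [i ->]; rewrite flip_neq. Qed.

Definition deg m (w : {set hcube_vertex m} -> nat) (y : hcube_vertex m) :=
  #|[set z | hcube_adj y z && (w [set y; z] != 0)]|.

Definition InvE m (v0 : hcube_vertex m) (s : nim_pos (hcube_vertex m)) :=
  [/\ forall e, s.1 e <= 1, side s.2 = side v0 &
      forall y, side y != side v0 -> ~~ odd (deg s.1 y)].

Lemma deg_del m (w : {set hcube_vertex m} -> nat) y x :
  y != x ->
  [set z | hcube_adj y z && ((if [set y; z] == [set y; x] then 0 else w [set y; z]) != 0)]
  = [set z | hcube_adj y z && (w [set y; z] != 0)] :\ x.
Proof.
move=> yx; apply/setP => z; rewrite !inE set2_eq_l //.
by case: (z == x) => /=; rewrite ?andbF.
Qed.

Lemma stepE m (v0 : hcube_vertex m) s t :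
  InvE v0 s -> nim_move (@hcube_adj m) s t ->
  exists u, nim_move (@hcube_adj m) t u /\ InvE v0 u.
Proof.
case: s => w x; case: t => w' y [le1 sx Hdeg] mv.
have [/= a E1 Ht] := move_unit le1 mv.
simpl in sx, Hdeg.
have sy : side y = ~~ side v0 by rewrite (side_adj a) sx.
have yx : y != x by rewrite (adj_neq a).
have le1' : forall e, w' e <= 1 by move=> e; rewrite Ht; case: ifP.
have Sy : [set z | hcube_adj y z && (w' [set y; z] != 0)] =
          [set z | hcube_adj y z && (w [set y; z] != 0)] :\ x.
  rewrite -deg_del //; apply/setP => z; rewrite !inE Ht (set2C x y) //.
have xin : x \in [set z | hcube_adj y z && (w [set y; z] != 0)].
  by rewrite inE (set2C y x) E1 andbT adj_sym.
have dy : odd (deg w' y).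
  have syv : side y != side v0 by rewrite sy; case: (side v0).
  have := Hdeg y syv.
  by rewrite /deg Sy (cardsD1 x) xin add1n /= negbK.
have [z zin] : exists z, z \in [set z | hcube_adj y z && (w' [set y; z] != 0)].
  by apply/card_gt0P; move: dy; rewrite /deg; case: #|_|.
rewrite inE in zin; case/andP: zin => ayz wz.
have wz1 : w' [set y; z] = 1 by apply/eqP; rewrite eqn_leq le1' lt0n wz.
have sz : side z = side v0 by rewrite (side_adj ayz) sy negbK.
have zy : z != y by rewrite (adj_neq ayz).
exists ((fun e => if e == [set y; z] then 0 else w' e), z); split; first exact: mk_move.
split => //=.
  by move=> e; case: ifP.
move=> y' sy'.
have y'z : y' != z by apply/eqP => e; rewrite e sz eqxx in sy'.
case: (y' =P y) => [->|ne].
  move: dy; rewrite /deg deg_del; last by rewrite eq_sym.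
  by rewrite (cardsD1 z) inE ayz wz add1n.
have y'x : y' != x by apply/eqP => e; rewrite e sx eqxx in sy'.
have -> : deg (fun e => if e == [set y; z] then 0 else w' e) y' = deg w y'.
  rewrite /deg; apply: eq_card => z0; rewrite !inE.
  rewrite (negbTE (@neq_set _ y' _ _ (set21 _ _) _)); last by rewrite in_set2 negb_or (introN eqP ne) y'z.
  rewrite Ht (negbTE (@neq_set _ y' _ _ (set21 _ _) _)) //.
  by rewrite in_set2 negb_or y'x (introN eqP ne).
exact: Hdeg.
Qed.

Lemma even_lose m (v0 : hcube_vertex m) s :
  nim_win (@hcube_adj m) s -> InvE v0 s -> False.
Proof.
elim => s' t mv _ IH Hs.
have [u [mu' Hu]] := stepE Hs mv.
exact: IH u mu' Hu.
Qed.

Lemma initE m (v0 : hcube_vertex m) : ~~ odd m ->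
  InvE v0 (@hcube_unit_weights m, v0).
Proof.
move=> em; split => //=; first exact: w0_le1.
move=> y _; rewrite /deg.
have -> : [set z | hcube_adj y z && (hcube_unit_weights [set y; z] != 0)] = (flip y) @: [set: 'I_m].
  apply/setP => z; rewrite inE; apply/idP/imsetP.
    by case/andP => /adj_inv [i ->] _; exists i.
  by case=> i _ ->; rewrite adj_flip w0_adj // adj_flip.
by rewrite card_imset ?cardsT ?card_ord // => a b /flip_inj.
Qed.

Definition pt n (i : 'I_n.+1) : 'I_n.+1 := inord (n.-1 - i).

Lemma pt_val n (i : 'I_n.+1) : (pt i : nat) = n.-1 - i.
Proof. by rewrite /pt inordK //; lia. Qed.

Lemma pt_props n (i : 'I_n.+1) : ~~ odd n -> i != ord_max ->
  [/\ pt i != ord_max, pt i != i & pt (pt i) = i].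
Proof.
move=> en ne.
have hi : (i : nat) < n.
  rewrite ltn_neqAle -ltnS ltn_ord andbT; apply: contra ne => /eqP h.
  by apply/eqP; apply: val_inj.
have hn : n./2 + n./2 = n.
  by have := odd_double_half n; rewrite (negbTE en) add0n -addnn.
split.
- by apply/eqP => /(congr1 (@nat_of_ord _)); rewrite pt_val /=; lia.
- by apply/eqP => /(congr1 (@nat_of_ord _)); rewrite pt_val; lia.
- by apply: ord_inj; rewrite !pt_val; lia.
Qed.

Lemma flip_eq m (v : hcube_vertex m) a b : (flip v a == flip v b) = (a == b).
Proof. by apply/eqP/eqP => [/flip_inj|->]. Qed.

Lemma notin2 (T : finType) (x a b c : T) : x != a -> x != b -> [set x; c] != [set a; b].
Proof. by move=> xa xb; apply: (@neq_set _ x); rewrite ?set21 // in_set2 negb_or xa xb. Qed.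

Lemma upd_eq (T : finType) (w : {set T} -> nat) E1 E2 A B :
  w A = w B -> ((A == E1) || (A == E2)) = ((B == E1) || (B == E2)) ->
  (if A == E2 then 0 else if A == E1 then 0 else w A) =
  (if B == E2 then 0 else if B == E1 then 0 else w B).
Proof.
move=> wAB; case: (A == E1); case: (A == E2); case: (B == E1); case: (B == E2) => //=.
Qed.

Lemma eq_sym_neq (T : eqType) (a b : T) : a != b -> b != a.
Proof. by rewrite eq_sym. Qed.

Definition Inv n (v0 : hcube_vertex n.+1) (s : nim_pos (hcube_vertex n.+1)) :=
  [/\ forall e, s.1 e <= 1,
      exists i, s.2 = flip v0 i,
      forall a b, a != b ->
        s.1 [set flip (flip v0 a) b; flip v0 a] = s.1 [set flip (flip v0 a) b; flip v0 b],
      forall a, a != ord_max -> s.1 [set v0; flip v0 a] = s.1 [set v0; flip v0 (pt a)]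
    & s.1 [set v0; flip v0 ord_max] = 0].

Lemma stepO n (v0 : hcube_vertex n.+1) s t : ~~ odd n ->
  Inv v0 s -> nim_move (@hcube_adj n.+1) s t ->
  exists u, nim_move (@hcube_adj n.+1) t u /\ Inv v0 u.
Proof.
move=> en; case: s => w x; case: t => w' y [le1 [i xi] H2 H0 Hl] mv.
have [/= a E1 Ht] := move_unit le1 mv.
simpl in xi, H2, H0, Hl; subst x.
have le1' : forall e, w' e <= 1 by move=> e; rewrite Ht; case: ifP.
have [j yj] := adj_inv a; subst y.
case: (j =P i) => [ji|ji].
  subst j; rewrite !flipK in E1 Ht *.
  rewrite set2C in E1 Ht.
  have iM : i != ord_max by apply/eqP => e; move: E1; rewrite e Hl.
  have [pM pi ppi] := pt_props en iM.
  set q := pt i in pM pi ppi *.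
  have E2ne : [set v0; flip v0 q] != [set v0; flip v0 i].
    by rewrite set2_eq_l ?flip_eq // eq_sym flip_neq.
  have w'2 : w' [set v0; flip v0 q] = 1 by rewrite Ht (negbTE E2ne) -(H0 i iM).
  exists ((fun e => if e == [set v0; flip v0 q] then 0 else w' e), flip v0 q); split.
    by apply: mk_move => //; exact: adj_flip.
  split => /=.
  - by move=> e; case: ifP => // _; exact: le1'.
  - by exists q.
  - move=> a0 b0 ab; rewrite !Ht.
    rewrite !(negbTE (notin2 _ (flip2_neq0 v0 ab) (flip2_neq1 v0 _ ab))).
    exact: H2.
  - move=> a0 a0M; rewrite !Ht; apply: upd_eq; first exact: H0.
    have [_ _ ppa] := pt_props en a0M.
    have nv : forall c, v0 != flip v0 c by move=> c; rewrite eq_sym flip_neq.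
    rewrite !set2_eq_l // !flip_eq.
    have e1 : (pt a0 == i) = (a0 == q).
      by apply/eqP/eqP => h; [rewrite /q -h ppa | rewrite h ppi].
    have e2 : (pt a0 == q) = (a0 == i).
      apply/eqP/eqP => h; last by rewrite h.
      by rewrite -ppa h ppi.
    by rewrite e1 e2 orbC.
  - rewrite !Ht !set2_eq_l ?flip_eq; try by rewrite eq_sym flip_neq.
    by rewrite eq_sym (negbTE pM) eq_sym (negbTE iM).
have ij : i != j by apply/eqP => e; apply: ji.
set x := flip (flip v0 i) j in a E1 Ht *.
have yx : flip v0 j = flip x i by rewrite /x flipC flipK.
have E2ne : [set x; flip v0 j] != [set flip v0 i; x].
  apply: (@neq_set _ (flip v0 j)); first by rewrite set22.
  rewrite in_set2 negb_or flip_eq eq_sym ij /= eq_sym.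
  exact: flip2_neq1.
have w'2 : w' [set x; flip v0 j] = 1 by rewrite Ht (negbTE E2ne) -(H2 i j ij) set2C.
exists ((fun e => if e == [set x; flip v0 j] then 0 else w' e), flip v0 j); split.
  by apply: mk_move => //; rewrite yx; exact: adj_flip.
have key : forall a0 b0, a0 != b0 ->
   (([set flip (flip v0 a0) b0; flip v0 a0] == [set flip v0 i; x]) ||
    ([set flip (flip v0 a0) b0; flip v0 a0] == [set x; flip v0 j])) =
   (flip (flip v0 a0) b0 == x).
  move=> a0 b0 ab; apply/idP/idP.
    case/orP => /eqP E.
      have : flip (flip v0 a0) b0 \in [set flip v0 i; x] by rewrite -E set21.
      by rewrite in_set2 (negbTE (flip2_neq1 _ _ ab)).
    have : flip (flip v0 a0) b0 \in [set x; flip v0 j] by rewrite -E set21.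
    by rewrite in_set2 (negbTE (flip2_neq1 _ _ ab)) orbF.
  move/eqP => e; have := flip2_eq ab e; rewrite e.
  by case/orP => /eqP ->; rewrite ?eqxx ?orbT // set2C eqxx.
have nv1 : v0 != flip v0 i by rewrite eq_sym flip_neq.
have nvx : v0 != x by rewrite eq_sym flip2_neq0.
have nvj : v0 != flip v0 j by rewrite eq_sym flip_neq.
split => /=.
- by move=> e; case: ifP => // _; exact: le1'.
- by exists j.
- move=> a0 b0 ab; rewrite !Ht; apply: upd_eq; first exact: H2.
  have kb := key b0 a0 (eq_sym_neq ab).
  by rewrite key // [in RHS]flipC kb flipC.
- move=> a0 a0M; rewrite !Ht.
  rewrite !(negbTE (notin2 _ nv1 nvx)) !(negbTE (notin2 _ nvx nvj)).
  exact: H0.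
- rewrite !Ht (negbTE (notin2 _ nv1 nvx)) (negbTE (notin2 _ nvx nvj)).
  exact: Hl.
Qed.

Lemma odd_win n (v0 : hcube_vertex n.+1) : ~~ odd n ->
  forall k s, mu s < k -> Inv v0 s ->
  forall t, nim_move (@hcube_adj n.+1) s t -> nim_win (@hcube_adj n.+1) t.
Proof.
move=> en; elim=> [|k IH] s // hk Hs t mv.
have [u [mvu Hu]] := stepO en Hs mv.
apply: (NimWin mvu) => u' mv'.
apply: (IH u _ Hu u' mv').
have := move_mu mv; have := move_mu mvu; lia.
Qed.

Lemma initO n (v0 : hcube_vertex n.+1) : ~~ odd n ->
  Inv v0 ((fun e => if e == [set v0; flip v0 ord_max] then 0 else hcube_unit_weights e),
          flip v0 ord_max).
Proof.
move=> en.
have nvM : forall c, c != ord_max -> [set v0; flip v0 c] != [set v0; flip v0 ord_max].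
  by move=> c cM; rewrite set2_eq_l ?flip_eq // eq_sym flip_neq.
split => /=.
- by move=> e; case: ifP => // _; exact: w0_le1.
- by exists ord_max.
- move=> a b ab.
  have n1 : flip (flip v0 a) b != v0 by exact: flip2_neq0.
  have n2 : flip (flip v0 a) b != flip v0 ord_max by exact: flip2_neq1.
  rewrite !(negbTE (notin2 _ n1 n2)) !w0_adj //.
    by rewrite flipC; apply: adj_sym; exact: adj_flip.
  by apply: adj_sym; exact: adj_flip.
- move=> a aM; have [pM _ _] := pt_props en aM.
  by rewrite (negbTE (nvM _ aM)) (negbTE (nvM _ pM)) !w0_adj //; exact: adj_flip.
- by rewrite eqxx.
Qed.

Theorem mainTheorem4 (n : nat) (v0 : hcube_vertex n) :
  1 <= n ->
  (nim_win (@hcube_adj n) (@hcube_unit_weights n, v0) <-> odd n).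
Proof.
case: n v0 => [//|n] v0 _.
case en: (odd n.+1); split => // H.
  have en' : ~~ odd n by move: en => /=; case: (odd n).
  have mv0 := @mk_move n.+1 (@hcube_unit_weights n.+1) v0 (flip v0 ord_max) (adj_flip _ _)
                (w0_adj (adj_flip _ _)).
  apply: (NimWin mv0) => u mvu.
  exact: (odd_win en' (ltnSn _) (initO v0 en') mvu).
exfalso; apply: (even_lose H (initE v0 _)); by rewrite en.
Qed.
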